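(* Let $\zeta\in\mathbb{C}$ with $|\zeta|<1$, and let $\alpha_0=\zeta$ and $\alpha_j=0$ for $j\ge1$ (Bernstein–Szegő polynomials). Then for nonnegative integers $n,m,r,s$, \[ \mu_{n,m}=\begin{cases}\delta_{n,m}&\text{if } n\le m,\\ \zeta^{n-m}&\text{if } n>m,\end{cases}\qquad \mu_{n,r,s}=\begin{cases}\mu_{n,s}&\text{if } r=0,\\ \delta_{s,n+r}&\text{if } r>0.\end{cases} \]
   Context: For a polynomial $f(z)=\sum_{k=0}^n a_kz^k$ of degree $n$, write $\overline{f}(z)=\sum_k\overline{a_k}z^k$ and $f^*(z)=z^n\overline{f}(1/z)$. Given $(\alpha_n)$ with $|\alpha_n|<1$, define monic $\Phi_n$ by $\Phi_0=1$, $\Phi_{n+1}(z)=z\Phi_n(z)-\overline{\alpha_n}\Phi_n^*(z)$. Let $\mathcal{L}$ be the unique linear functional on Laurent polynomials with $\mathcal{L}(1)=1$ and $\mathcal{L}(\Phi_m(z)\overline{\Phi_n}(1/z))=0$ for $m\neq n$; set $\langle f,g\rangle=\mathcal{L}(f(z)\overline{g}(1/z))$, $\mu_{n,r,s}=\langle\Phi_s(z),z^n\Phi_r(z)\rangle/\langle\Phi_s,\Phi_s\rangle$ and $\mu_{n,m}=\mu_{n,0,m}$. *)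

(* Defs.v *)
From HB Require Import structures.
From mathcomp Require Import all_boot all_order all_algebra.
From mathcomp Require Import complex.
From mathcomp Require Import reals.
Set Implicit Arguments. Unset Strict Implicit. Unset Printing Implicit Defensive.
Import Order.TTheory GRing.Theory Num.Theory.
Local Open Scope ring_scope.

Section OPUC.
Variable C : numClosedFieldType.

Definition polyconj (p : {poly C}) : {poly C} := map_poly Num.conj p.

(* f^*(z) = z^n \overline{f}(1/z), n = deg f *)
Definition polystar (p : {poly C}) : {poly C} :=
  \poly_(k < size p) (p`_((size p).-1 - k))^*.

Fixpoint Phi (alpha : nat -> C) (n : nat) : {poly C} :=
  match n with
  | 0 => 1
  | n'.+1 => 'X * Phi alpha n' - (alpha n')^* *: polystar (Phi alpha n')
  end.

(* A linear functional L on Laurent polynomials is given by its moments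
   c k = L(z^k), k : int.  Then
   <f,g> = L(f(z) \overline{g}(1/z)) = sum_{i,j} f_i conj(g_j) c (i - j). *)
Definition inner (c : int -> C) (f g : {poly C}) : C :=
  \sum_(i < size f) \sum_(j < size g) f`_i * (g`_j)^* * c (i%:Z - j%:Z).

Definition mu (alpha : nat -> C) (c : int -> C) (n r s : nat) : C :=
  inner c (Phi alpha s) ('X^n * Phi alpha r) / inner c (Phi alpha s) (Phi alpha s).

Definition is_OPUC_functional (alpha : nat -> C) (c : int -> C) : Prop :=
  c 0 = 1 /\ forall m n : nat, m <> n -> inner c (Phi alpha m) (Phi alpha n) = 0.

End OPUC.

(* Main.v *)
Require Import Defs.
From HB Require Import structures.
From mathcomp Require Import all_boot all_order all_algebra.
From mathcomp Require Import complex.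
From mathcomp Require Import reals zify.
Import Order.TTheory GRing.Theory Num.Theory.
Local Open Scope ring_scope.


Section G.
Variable C : numClosedFieldType.
Variable c : int -> C.

Lemma inner_pad (f g : {poly C}) N M : (size f <= N)%N -> (size g <= M)%N ->
  inner c f g = \sum_(i < N) \sum_(j < M) f`_i * (g`_j)^* * c (i%:Z - j%:Z).
Proof.
move=> hf hg; rewrite /inner (big_ord_widen N (fun i => \sum_(j < size g) f`_i * (g`_j)^* * c (i%:Z - j%:Z))) //.
rewrite big_mkcond; apply: eq_bigr => i _; case: ifP => hi.
  rewrite (big_ord_widen M (fun j => f`_i * (g`_j)^* * c (i%:Z - j%:Z))) //.
  rewrite big_mkcond; apply: eq_bigr => j _; case: ifP => hj //.
  by rewrite [g`_j]nth_default ?conjC0 ?mulr0 ?mul0r // leqNgt hj.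
by rewrite big1 // => j _; rewrite nth_default ?mul0r // leqNgt hi.
Qed.

Lemma innerDl f g h : inner c (f + g) h = inner c f h + inner c g h.
Proof.
set N := maxn (size f) (size g).
rewrite !(@inner_pad _ _ N (size h)) ?leq_maxl ?leq_maxr ?size_polyD //.
rewrite -big_split; apply: eq_bigr => i _; rewrite -big_split; apply: eq_bigr => j _.
by rewrite coefD !mulrDl.
Qed.

Lemma innerZl a f h : inner c (a *: f) h = a * inner c f h.
Proof.
rewrite !(@inner_pad _ _ (size f) (size h)) ?size_scale_leq //.
rewrite mulr_sumr; apply: eq_bigr => i _; rewrite mulr_sumr; apply: eq_bigr => j _.
by rewrite coefZ !mulrA.
Qed.

Lemma innerBl f g h : inner c (f - g) h = inner c f h - inner c g h.
Proof. by rewrite -scaleN1r innerDl innerZl mulN1r. Qed.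

Lemma innerDr f g h : inner c h (f + g) = inner c h f + inner c h g.
Proof.
set N := maxn (size f) (size g).
rewrite !(@inner_pad _ _ (size h) N) ?leq_maxl ?leq_maxr ?size_polyD //.
rewrite -big_split; apply: eq_bigr => i _; rewrite -big_split; apply: eq_bigr => j _.
by rewrite coefD rmorphD /= !mulrDr !mulrDl.
Qed.

Lemma innerZr a f h : inner c h (a *: f) = a^* * inner c h f.
Proof.
rewrite !(@inner_pad _ _ (size h) (size f)) ?size_scale_leq //.
rewrite mulr_sumr; apply: eq_bigr => i _; rewrite mulr_sumr; apply: eq_bigr => j _.
by rewrite coefZ rmorphM /= !mulrA [h`_i * _]mulrC.
Qed.

Lemma innerBr f g h : inner c h (f - g) = inner c h f - inner c h g.
Proof. by rewrite -scaleN1r innerDr innerZr rmorphN1 mulN1r. Qed.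

Lemma innerXX i j : inner c 'X^i 'X^j = c (i%:Z - j%:Z).
Proof.
rewrite /inner !size_polyXn big_ord_recr /= big1 ?add0r; last first.
  move=> k _; rewrite big1 // => l _.
  by rewrite coefXn (ltn_eqF (ltn_ord k)) !mul0r.
rewrite big_ord_recr /= big1 ?add0r; last first.
  move=> l _; by rewrite [X in _ * X^* * _]coefXn (ltn_eqF (ltn_ord l)) conjC0 mulr0 mul0r.
by rewrite !coefXn !eqxx conjC1 !mul1r.
Qed.

End G.

Definition alz (C : numClosedFieldType) (zeta : C) := fun j : nat => if j == 0%N then zeta else 0.
Arguments alz {C}.

Lemma polystar1 (C : numClosedFieldType) : polystar (1 : {poly C}) = 1.
Proof.
apply/polyP => i; rewrite coef_poly size_poly1 coefC.
by case: i => [|i] //=; rewrite ?coefC /= ?conjC1 ?conjC0.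
Qed.

Lemma PhiS (C : numClosedFieldType) (zeta : C) m :
  Phi (alz zeta) m.+1 = 'X^(m.+1) - (Num.conj zeta) *: 'X^m.
Proof.
elim: m => [|m IH].
  by rewrite /= polystar1 mulr1 expr1 expr0 alg_polyC.
have -> : Phi (alz zeta) m.+2 = 'X * Phi (alz zeta) m.+1.
  by rewrite [in LHS]/= {2}/alz /= conjC0 scale0r subr0.
by rewrite IH mulrBr -exprS -scalerAr -exprS.
Qed.

Lemma PhiXn (C : numClosedFieldType) (zeta : C) n r :
  'X^n * Phi (alz zeta) r.+1 = Phi (alz zeta) (n + r).+1.
Proof. by rewrite !PhiS mulrBr -scalerAr -!exprD addnS. Qed.

Lemma c_diff (C : numClosedFieldType) (zeta : C) c
  (hL : is_OPUC_functional (alz zeta) c) (i j : nat) :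
  c (i%:Z - j%:Z) = if (j <= i)%N then zeta^* ^+ (i - j) else zeta ^+ (j - i).
Proof.
case: hL => h0 hL.
have P0 : Phi (alz zeta) 0 = 'X^0 by rewrite expr0.
have cpos m : c m%:Z = zeta^* ^+ m.
  elim: m => [|m IH]; first by rewrite h0 expr0.
  have := hL m.+1 0%N (@PeanoNat.Nat.neq_succ_0 m); rewrite PhiS P0 innerBl innerZl !innerXX !subr0 IH.
  by move/eqP; rewrite subr_eq0 -exprS => /eqP.
have cneg m : c (- m%:Z) = zeta ^+ m.
  elim: m => [|m IH]; first by rewrite oppr0 h0 expr0.
  have := hL 0%N m.+1 (@PeanoNat.Nat.neq_0_succ m); rewrite PhiS P0 innerBr innerZr !innerXX !sub0r IH conjCK.
  by move/eqP; rewrite subr_eq0 -exprS => /eqP.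
case: leqP => hij; first by rewrite subzn // cpos.
by rewrite -opprB subzn ?cneg // ltnW.
Qed.
Arguments c_diff {C zeta c}.

Lemma denom (C : numClosedFieldType) (zeta : C) c
  (hL : is_OPUC_functional (alz zeta) c) s :
  inner c (Phi (alz zeta) s.+1) (Phi (alz zeta) s.+1) = 1 - Num.conj zeta * zeta.
Proof.
rewrite PhiS innerBl !innerBr !innerZl !innerZr !innerXX !(c_diff hL) conjCK.
rewrite !ltnSn leqnSn ltnn leqnn subnn subSnn !expr0 !expr1.
by rewrite subnn expr0 mulr1 subrr subr0 mulrC.
Qed.

Lemma denom_neq0 (C : numClosedFieldType) (zeta : C) (hz : `|zeta| < 1) :
  1 - Num.conj zeta * zeta != 0.
Proof.
rewrite subr_eq0 mulrC -normCK eq_sym; apply/negP => /eqP h.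
have := exprn_ilt1 2 (normr_ge0 zeta) hz; rewrite h ltxx //.
Qed.

Lemma numer (C : numClosedFieldType) (zeta : C) c
  (hL : is_OPUC_functional (alz zeta) c) n m :
  inner c (Phi (alz zeta) m.+1) ('X^n * Phi (alz zeta) 0) =
  if (n <= m)%N then 0 else zeta ^+ (n - m.+1) * (1 - Num.conj zeta * zeta).
Proof.
rewrite PhiS [Phi _ 0]/= mulr1 innerBl innerZl !innerXX !(c_diff hL).
case: (ltngtP n m.+1) => h.
- have hn : (n <= m)%N by [].
  by rewrite hn subSn // exprS subrr.
- rewrite leqNgt (ltn_trans (ltnSn m) h) /=.
  have -> : (n - m = (n - m.+1).+1)%N by lia.
  by rewrite exprSr mulrBr mulr1 mulrCA mulrA.
- subst n; rewrite ltnn subnn subSnn expr0 expr1.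
  by rewrite mul1r.
Qed.

Lemma main_gen (C : numClosedFieldType) (zeta : C) (hz : `|zeta| < 1) c
  (hL : is_OPUC_functional (alz zeta) c) n m r s :
    mu (alz zeta) c n 0 m
      = (if (n <= m)%N then (n == m)%:R else zeta ^+ (n - m))
    /\ mu (alz zeta) c n r s
      = (if r == 0%N then mu (alz zeta) c n 0 s
         else (s == n + r)%N%:R).
Proof.
have d0 : inner c (Phi (alz zeta) 0) (Phi (alz zeta) 0) = 1.
  by rewrite /= -[1]/('X^0 : {poly C}) innerXX; case: hL.
split.
  case: m => [|m].
    rewrite /mu d0 divr1 /= mulr1.
    have -> : (1 : {poly C}) = 'X^0 by rewrite expr0.
    rewrite innerXX (c_diff hL).
    by case: n.
  rewrite /mu numer // denom //.
  case: (ltngtP n m.+1) => h.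
  - by rewrite (_ : (n <= m)%N = true) ?mul0r.
  - rewrite leqNgt (ltn_trans (ltnSn m) h) /= mulfK //.
    exact: denom_neq0.
  - by subst n; rewrite ltnn subnn expr0 mul1r mulfV // denom_neq0.
case: r => [|r] //=.
rewrite /mu PhiXn.
case: (eqVneq s (n + r.+1)%N) => [->|hs].
  by rewrite addnS mulfV // denom // denom_neq0.
rewrite (proj2 hL) ?mul0r //.
  by move=> e; move: hs; rewrite e addnS eqxx.
Qed.

Local Open Scope complex_scope.

Theorem proposition4p4 (R : realType) (zeta : R[i]) (hz : `|zeta| < 1)
  (c : int -> R[i])
  (hL : is_OPUC_functional (fun j : nat => if j == 0%N then zeta else 0) c) :
  forall n m r s : nat,
    mu (fun j : nat => if j == 0%N then zeta else 0) c n 0 m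
      = (if (n <= m)%N then (n == m)%:R else zeta ^+ (n - m))
    /\ mu (fun j : nat => if j == 0%N then zeta else 0) c n r s
      = (if r == 0%N then mu (fun j : nat => if j == 0%N then zeta else 0) c n 0 s
         else (s == n + r)%N%:R).
Proof.
move=> n m r s; exact: (@main_gen _ zeta hz c hL n m r s).
Qed.
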